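(* For all integers $n\ge 1$, $c\ge 0$ and $k$, $$\left\langle {n \atop k}\right\rangle_{\!c}=\left\langle {n \atop c(n-1)-k}\right\rangle_{\!c}.$$
   Context: A $c$-rook placement on an $n\times n$ board is a placement of $cn$ rooks on the cells, several rooks being allowed in the same cell, such that every row and every column contains exactly $c$ rooks (equivalently, an $n\times n$ matrix of nonnegative integers with all row and column sums equal to $c$). A drop is a rook lying strictly below the main diagonal, i.e.\ in a cell $(i,j)$ (row $i$, column $j$) with $i>j$, counted with multiplicity. The generalized Eulerian number $\left\langle {n \atop k}\right\rangle_{\!c}$ is the number of $c$-rook placements on the $n\times n$ board with exactly $k$ drops (this is $0$ if $k<0$). *)

(* Defs.v *)
From HB Require Import structures.
From mathcomp Require Import all_boot all_order all_algebra.
Set Implicit Arguments. Unset Strict Implicit. Unset Printing Implicit Defensive.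
Import GRing.Theory Num.Theory.

(* A c-rook placement on the n x n board: an n x n matrix of nonnegative
   integers with all row and column sums equal to c.  Every entry of such a
   matrix is at most c, so we represent entries in 'I_c.+1 (values 0..c);
   this loses no placements and makes the set of placements finite. *)
Definition rook_placement (n c : nat) (A : 'M['I_c.+1]_n) : bool :=
  [forall i : 'I_n, \sum_(j < n) (A i j : nat) == c] &&
  [forall j : 'I_n, \sum_(i < n) (A i j : nat) == c].

Definition drops (n c : nat) (A : 'M['I_c.+1]_n) : nat :=
  \sum_(i < n) \sum_(j < n | j < i) (A i j : nat).

(* Generalized Eulerian number <n, k>_c, for an integer k
   (automatically 0 for k < 0). *)
Definition geuler (n c : nat) (k : int) : nat :=
  #|[set A : 'M['I_c.+1]_n | rook_placement A & (Posz (drops A) == k)]|.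

(* Main.v *)
Require Import Defs.
From mathcomp Require Import all_boot all_order all_algebra.
From mathcomp Require Import zify.
Import GRing.Theory Num.Theory.

Section S.
Variables (n c : nat).
Implicit Types A : 'M['I_c.+1]_n.

Definition fA A : 'M['I_c.+1]_n := \matrix_(r, s) A s (ord_pred r).

Lemma rp_f A : rook_placement A -> rook_placement (fA A).
Proof.
case/andP=> /forallP Hr /forallP Hc; apply/andP; split; apply/forallP=> i.
  under eq_bigr do rewrite mxE. exact: Hc.
under eq_bigr do rewrite mxE.
rewrite (reindex_inj (@ordS_inj n)) /=.
under eq_bigr do rewrite ordSK. exact: Hr.
Qed.

Lemma f_inj : injective fA.
Proof.
move=> A B /matrixP H; apply/matrixP=> i j.
by have := H (ordS j) i; rewrite !mxE ordSK.
Qed.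

Lemma drops_f A : (0 < n)%N -> rook_placement A ->
  (drops (fA A) + drops A + c = c * n)%N.
Proof.
move=> n0 /andP[/forallP Hr /forallP Hc].
have tot : (\sum_(q : 'I_n * 'I_n) (A q.1 q.2 : nat) = c * n)%N.
  rewrite -(pair_bigA _ (fun i j => (A i j : nat))) /=.
  under eq_bigr do rewrite (eqP (Hr _)).
  by rewrite sum_nat_const card_ord mulnC.
have dA : drops A = (\sum_(q : 'I_n * 'I_n | q.2 < q.1) (A q.1 q.2 : nat))%N.
  by rewrite /drops (pair_big_dep xpredT (fun (i j : 'I_n) => j < i)%N (fun i j => (A i j : nat))).
have dF : drops (fA A) = (\sum_(q : 'I_n * 'I_n | q.1 < ordS q.2) (A q.1 q.2 : nat))%N.
  rewrite /drops (pair_big_dep xpredT (fun (i j : 'I_n) => j < i)%N (fun i j => (fA A i j : nat))) /=.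
  have hinj : injective (fun q : 'I_n * 'I_n => (ordS q.2, q.1)).
    move=> [a b] [a' b'] H; have e1 := congr1 fst H; have e2 := congr1 snd H; simpl in e1, e2.
    by rewrite e2 (@ordS_inj n _ _ e1).
  rewrite (reindex_inj hinj) /=.
  by apply: eq_bigr => q _; rewrite mxE ordSK.
have hj0 : (n.-1 < n)%N by rewrite prednK.
pose j0 : 'I_n := Ordinal hj0.
have col : (\sum_(q : 'I_n * 'I_n | q.2 == j0) (A q.1 q.2 : nat) = c)%N.
  rewrite -(pair_big_dep xpredT (fun (i j : 'I_n) => j == j0) (fun i j => (A i j : nat))) /=.
  under eq_bigr do rewrite big_pred1_eq.
  exact: (eqP (Hc j0)).
have E1 := @bigID _ _ _ _ (index_enum _) (fun q : 'I_n * 'I_n => q.2 < q.1)%N xpredT (fun q : 'I_n * 'I_n => (A q.1 q.2 : nat)).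
have E2 := @bigID _ _ _ _ (index_enum _) (fun q : 'I_n * 'I_n => q.1 < ordS q.2)%N (fun q : 'I_n * 'I_n => ~~ (q.2 < q.1)%N) (fun q : 'I_n * 'I_n => (A q.1 q.2 : nat)).
have E3 : (\sum_(q : 'I_n * 'I_n | ~~ (q.2 < q.1)%N && (q.1 < ordS q.2)%N) (A q.1 q.2 : nat) =
   \sum_(q : 'I_n * 'I_n | (q.1 < ordS q.2)%N) (A q.1 q.2 : nat))%N.
  apply: eq_bigl => q.
  case: q => [[a Ha] [b Hb]] /=.
  case: (ltnP b n.-1) => hb.
    rewrite modn_small; last by lia.
    by case: (ltnP b a) => /=; lia.
  have -> : b.+1 = n by lia.
  by rewrite modnn /= andbF.
have E4 : (\sum_(q : 'I_n * 'I_n | ~~ (q.2 < q.1)%N && ~~ (q.1 < ordS q.2)%N) (A q.1 q.2 : nat) =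
   \sum_(q : 'I_n * 'I_n | q.2 == j0) (A q.1 q.2 : nat))%N.
  apply: eq_bigl => q.
  case: q => [[a Ha] [b Hb]] /=.
  rewrite -val_eqE /=.
  case: (ltnP b n.-1) => hb.
    rewrite modn_small; last by lia.
    by case: (ltnP b a) => /=; lia.
  have -> : b.+1 = n by lia.
  rewrite modnn /=; lia.
simpl in E1, E2.
rewrite dF dA -tot E1 E2 E3 E4 col /=.
rewrite [in RHS]addnC -addnA /= [RHS]addnAC addnA; congr (_ + _ + _).
Qed.

End S.

Local Open Scope ring_scope.

Lemma card_le (n c : nat) (k : int) : (1 <= n)%N ->
  (geuler n c k <= geuler n c ((c * (n - 1))%N%:Z - k))%N.
Proof.
move=> n0; rewrite /geuler -(card_imset _ (@f_inj n c)).
apply: subset_leq_card; apply/subsetP=> B /imsetP[A].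
rewrite inE => /andP[rA /eqP dA] ->.
rewrite inE rp_f //=; apply/eqP.
have := @drops_f n c A n0 rA; rewrite -dA mulnBr muln1 => h; have hc : (c <= c * n)%N by rewrite leq_pmulr. lia.
Qed.

Theorem theorem4p1 (n c : nat) (k : int) :
  (1 <= n)%N ->
  geuler n c k = geuler n c ((c * (n - 1))%N%:Z - k).
Proof.
move=> n0; apply/eqP; rewrite eqn_leq card_le //=.
have e : ((c * (n - 1))%N%:Z - ((c * (n - 1))%N%:Z - k) = k)%R by lia.
by have := card_le n c ((c * (n - 1))%N%:Z - k) n0; rewrite e.
Qed.
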